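(* Let $k\ge1$, let $B\in\mathbb Z^{k\times k}$ with $\det B\ne0$, and let $\psi:B\mathbb Z^k\to\mathbb Z^k$, $z\mapsto Mz$, be a homomorphism given by a matrix $M\in\mathbb Q^{k\times k}$. Then \[R(\psi)=[\mathbb Z^k:B\mathbb Z^k]\cdot|\det(I_k-M)|_\infty .\]
   Context: $R(\psi)$ is the number of classes of the relation on $\mathbb Z^k$ given by $z_1\sim_\psi z_2\iff\exists z\in B\mathbb Z^k:\ z_1=z+z_2-\psi(z)$. $|a|_\infty=|a|$ if $a\neq0$ and $|0|_\infty=\infty$. *)

(* Defs.v *)
From mathcomp Require Import all_boot all_order all_algebra.
Set Implicit Arguments. Unset Strict Implicit. Unset Printing Implicit Defensive.
Import Order.TTheory GRing.Theory Num.Theory.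
Local Open Scope ring_scope.

Definition has_n_classes (T : Type) (r : T -> T -> Prop) (n : nat) : Prop :=
  exists f : 'I_n -> T,
    (forall i j, r (f i) (f j) -> i = j) /\ (forall t, exists i, r t (f i)).

Definition has_infinitely_many_classes (T : Type) (r : T -> T -> Prop) : Prop :=
  forall n : nat, exists f : 'I_n -> T, forall i j, r (f i) (f j) -> i = j.

Definition qmx (m n : nat) (A : 'M[int]_(m, n)) : 'M[rat]_(m, n) :=
  map_mx (fun z : int => z%:~R) A.

Definition inBZ (k : nat) (B : 'M[int]_k) (z : 'cV[int]_k) : Prop :=
  exists x : 'cV[int]_k, z = B *m x.

(* Coset relation of Z^k modulo B Z^k: its number of classes is the index
   [Z^k : B Z^k]. *)
Definition coset_rel (k : nat) (B : 'M[int]_k) (z1 z2 : 'cV[int]_k) : Prop :=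
  inBZ B (z1 - z2).

(* The Reidemeister relation of psi : B Z^k -> Z^k, z |-> M z:
   z1 ~ z2  iff  exists z in B Z^k, z1 = z + z2 - psi z
   (computed in Q^k, where psi z = M z). *)
Definition reid_rel (k : nat) (B : 'M[int]_k) (M : 'M[rat]_k)
  (z1 z2 : 'cV[int]_k) : Prop :=
  exists z : 'cV[int]_k, inBZ B z /\
    qmx z1 = qmx z + qmx z2 - M *m qmx z.

(* Main.v *)
Require Import Defs.
From mathcomp Require Import all_boot all_order all_algebra zify.
Import Order.TTheory GRing.Theory Num.Theory.
Local Open Scope ring_scope.

Lemma classes_transfer (T U : Type) (r : T -> T -> Prop) (r' : U -> U -> Prop)
  (phi : T -> U) (psi : U -> T) :
  (forall u, phi (psi u) = u) ->
  (forall t1 t2, r t1 t2 <-> r' (phi t1) (phi t2)) ->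
  (forall n, has_n_classes r' n -> has_n_classes r n) /\
  (has_infinitely_many_classes r' -> has_infinitely_many_classes r).
Proof.
move=> K H; split.
  move=> n [f [Hi Hs]]; exists (fun i => psi (f i)); split.
    by move=> i j /H; rewrite !K; apply: Hi.
  by move=> t; have [i Hti] := Hs (phi t); exists i; apply/H; rewrite K.
move=> Hinf n; have [f Hi] := Hinf n; exists (fun i => psi (f i)).
by move=> i j /H; rewrite !K; apply: Hi.
Qed.

Lemma classes_ext (T : Type) (r r' : T -> T -> Prop) :
  (forall t1 t2, r t1 t2 <-> r' t1 t2) ->
  (forall n, has_n_classes r' n -> has_n_classes r n) /\
  (has_infinitely_many_classes r' -> has_infinitely_many_classes r).
Proof. by move=> H; apply: (@classes_transfer _ _ r r' id id). Qed.

Lemma int_unit_norm (x : int) : x \is a GRing.unit -> `|x| = 1.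
Proof. by rewrite qualifE /= => /orP[]/eqP->. Qed.

Lemma coset_smith k (C L D R : 'M[int]_k) :
  L \in unitmx -> R \in unitmx -> C = L *m D *m R ->
  forall z1 z2, coset_rel C z1 z2 <->
     coset_rel D (invmx L *m z1) (invmx L *m z2).
Proof.
move=> uL uR -> z1 z2; split.
  case=> x Hx; exists (R *m x).
  by rewrite -mulmxBr Hx !mulmxA mulVmx // mul1mx.
case=> y Hy; exists (invmx R *m y).
have -> : z1 - z2 = L *m (invmx L *m z1 - invmx L *m z2).
  by rewrite mulmxBr !mulmxA mulmxV // !mul1mx.
by rewrite Hy -!mulmxA [R *m _]mulmxA mulmxV // mul1mx.
Qed.

Lemma diag_coset_dvd k (d : 'rV[int]_k) z1 z2 :
  coset_rel (diag_mx d) z1 z2 -> forall i, (d ord0 i %| z1 i ord0 - z2 i ord0)%Z.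
Proof.
case=> x Hx i; apply/dvdzP; exists (x i ord0).
have := congr1 (fun A : 'cV_k => A i 0) Hx.
rewrite mul_diag_mx !mxE mulrC => ->; by [].
Qed.

Lemma diag_zero k (d : 'rV[int]_k) i : d ord0 i = 0 ->
  has_infinitely_many_classes (coset_rel (diag_mx d)).
Proof.
move=> d0 n; exists (fun j : 'I_n => \col_(l < k) (if l == i then (j : nat)%:Z else 0)).
move=> j1 j2 /diag_coset_dvd /(_ i); rewrite d0 dvd0z !mxE eqxx subr_eq0.
by move=> /eqP [] /val_inj.
Qed.

Lemma diag_count k (d : 'rV[int]_k) : (forall i, d ord0 i != 0) ->
  has_n_classes (coset_rel (diag_mx d)) (\prod_i `|d ord0 i|)%N.
Proof.
move=> nz.
pose T := {dffun forall i : 'I_k, 'I_(`|d ord0 i|)}.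
have cardT : #|T| = (\prod_i `|d ord0 i|)%N.
  rewrite card_dep_ffun foldrE big_map big_enum /=.
  by apply: eq_bigr => i _; rewrite card_ord.
rewrite -cardT.
pose rep (g : T) : 'cV[int]_k := \col_(l < k) ((g l : nat)%:Z).
exists (fun j => rep (enum_val j)); split.
  move=> j1 j2 H; apply: enum_val_inj; apply/ffunP => l; apply/val_inj.
  have := @diag_coset_dvd _ _ _ _ H l; rewrite !mxE.
  set a := (enum_val j1 l : nat); set b := (enum_val j2 l : nat).
  have ha : (a < `|d ord0 l|)%N by exact: ltn_ord.
  have hb : (b < `|d ord0 l|)%N by exact: ltn_ord.
  move=> Hd; case: (eqVneq a b) => // neq; exfalso.
  have hp : (0 < `|a%:Z - b%:Z|)%N by rewrite absz_gt0 subr_eq0 eqz_nat.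
  have := dvdn_leq hp Hd.
  move: ha hb; clear; lia.
move=> z.
have Hlt : forall l : 'I_k, (`|(z l ord0 %% d ord0 l)%Z|%N < `|d ord0 l|)%N.
  move=> l; rewrite -ltz_nat gez0_abs ?modz_ge0 //.
  by rewrite abszE; apply: ltz_mod.
pose g : T := [ffun l => Ordinal (Hlt l)].
exists (enum_rank g); rewrite enum_rankK.
exists (\col_l ((z l ord0 %/ d ord0 l)%Z)).
apply/matrixP => l c; rewrite (ord1 c) mul_diag_mx !mxE ffunE /=.
rewrite gez0_abs ?modz_ge0 // {1}(divz_eq (z l ord0) (d ord0 l)).
rewrite addrK mulrC.
by [].
Qed.

Lemma unit_absz (x : int) : x \is a GRing.unit -> `|x|%N = 1%N.
Proof. by rewrite qualifE /= => /orP[]/eqP->. Qed.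

Lemma lattice_index k (C : 'M[int]_k) :
  (\det C != 0 -> has_n_classes (coset_rel C) `|\det C|%N) /\
  (\det C = 0 -> has_infinitely_many_classes (coset_rel C)).
Proof.
have [L uL [R uR [s _ HC]]] := int_Smith_normal_form C.
pose d : 'rV[int]_k := \row_i s`_i.
have HD : \matrix_(i, j) (s`_i *+ (i == j :> nat)) = diag_mx d.
  by apply/matrixP => i j; rewrite !mxE.
rewrite HD in HC.
have [Hn Hi] := @classes_transfer _ _ (coset_rel C) (coset_rel (diag_mx d))
  (mulmx (invmx L)) (mulmx L)
  (fun u => etrans (mulmxA _ _ _) (etrans (congr1 (mulmx^~ u) (mulVmx uL)) (mul1mx u)))
  (@coset_smith _ C L (diag_mx d) R uL uR HC).
have detC : \det C = \det L * (\prod_i d ord0 i) * \det R.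
  by rewrite HC !det_mulmx det_diag.
split.
  move=> nzC.
  have nzd : forall i, d ord0 i != 0.
    move=> i; apply: contra nzC => /eqP d0.
    by rewrite detC (bigD1 i) //= d0 mul0r mulr0 mul0r.
  have -> : `|\det C|%N = (\prod_i `|d ord0 i|)%N.
    rewrite detC !abszM.
    rewrite (@unit_absz (\det L)) -?unitmxE // (@unit_absz (\det R)) -?unitmxE //.
    rewrite mul1n muln1.
    by rewrite (@big_morph _ _ (fun x : int => `|x|%N) 1%N muln 1 _ abszM (erefl 1%N)).
  exact/Hn/diag_count.
move=> C0; apply: Hi.
have : \prod_i d ord0 i = 0.
  move: C0; rewrite detC => /eqP; rewrite !mulf_eq0.
  have := uL; have := uR; rewrite !unitmxE => uR' uL'.
  case/orP=> [/orP[]|] /eqP h //.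
  - by move: uL'; rewrite h unitr0.
  - by move: uR'; rewrite h unitr0.
move/eqP; rewrite prodf_seq_eq0 => /hasP [i _ /= /eqP hi].
exact: (@diag_zero _ _ i).
Qed.

Lemma qmxE m n (A : 'M[int]_(m, n)) : qmx A = map_mx (intr : int -> rat) A.
Proof. by []. Qed.
Lemma qmxM m n p (A : 'M[int]_(m, n)) (B : 'M[int]_(n, p)) :
  qmx (A *m B) = qmx A *m qmx B.
Proof. by rewrite !qmxE map_mxM. Qed.
Lemma qmxD m n (A B : 'M[int]_(m, n)) : qmx (A + B) = qmx A + qmx B.
Proof. by rewrite !qmxE map_mxD. Qed.
Lemma qmxB m n (A B : 'M[int]_(m, n)) : qmx (A - B) = qmx A - qmx B.
Proof. by rewrite !qmxE map_mxB. Qed.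
Lemma qmx_inj m n : injective (@qmx m n).
Proof.
move=> A B H; apply/matrixP => i j.
by have := congr1 (fun X : 'M[rat]_(m, n) => X i j) H; rewrite !mxE => /intr_inj.
Qed.
Lemma qmx_det n (A : 'M[int]_n) : \det (qmx A) = (\det A)%:~R.
Proof. by rewrite qmxE det_map_mx. Qed.

Theorem mainTheorem6 (k : nat) (B : 'M[int]_k) (M : 'M[rat]_k)
  (hk : (0 < k)%N)
  (hB : \det B != 0)
  (hpsi : forall x : 'cV[int]_k, exists y : 'cV[int]_k,
            qmx y = M *m qmx (B *m x)) :
  exists idx : nat,
    has_n_classes (coset_rel B) idx /\
    (\det (1%:M - M) = 0 -> has_infinitely_many_classes (reid_rel B M)) /\
    (\det (1%:M - M) != 0 ->
       exists n : nat,
         (n%:R : rat) = idx%:R * `|\det (1%:M - M)| /\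
         has_n_classes (reid_rel B M) n).
Proof.
have ex : forall j : 'I_k, exists y : 'cV[int]_k,
    qmx y == M *m qmx (B *m delta_mx j 0).
  by move=> j; have [y /eqP] := hpsi (delta_mx j 0); exists y.
pose y j := xchoose (ex j).
pose N : 'M[int]_k := \matrix_(i, j) y j i ord0.
have HN : qmx N = M *m qmx B.
  apply/matrixP => i j.
  have qd : qmx (delta_mx j (0 : 'I_1)) = delta_mx j 0.
    by apply/matrixP => a b; rewrite !mxE; case: (_ && _).
  have /eqP := xchooseP (ex j); rewrite -/(y j) qmxM qd mulmxA -colE => Hy.
  have := congr1 (fun X : 'cV[rat]_k => X i ord0) Hy.
  by rewrite !mxE => ->.
have key : forall x : 'cV[int]_k, M *m qmx (B *m x) = qmx (N *m x).
  by move=> x; rewrite !qmxM mulmxA HN.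
pose C := B - N.
have Hrel : forall z1 z2, reid_rel B M z1 z2 <-> coset_rel C z1 z2.
  move=> z1 z2; split.
    case=> z [[x ->]]; rewrite key -qmxD -qmxB => /qmx_inj ->.
    exists x; rewrite /C mulmxBl; apply/eqP; by rewrite subr_eq addrAC.
  case=> x Hx; exists (B *m x); split; first by exists x.
  rewrite key -qmxD -qmxB; congr qmx.
  by apply/eqP; rewrite addrAC -subr_eq Hx /C mulmxBl.
have [Hn Hi] := @classes_ext _ _ _ Hrel.
have detC : (\det C)%:~R = \det (1%:M - M) * (\det B)%:~R :> rat.
  rewrite -!qmx_det -det_mulmx mulmxBl mul1mx -HN -qmxB.
  by [].
have nzB : (\det B)%:~R != 0 :> rat by rewrite intr_eq0.
have [hC hCi] := @lattice_index _ C.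
have [hB1 _] := @lattice_index _ B.
exists `|\det B|%N; split; first exact: hB1.
split.
  move=> h0; apply/Hi/hCi; apply/eqP.
  by rewrite -(intr_eq0 rat) detC h0 mul0r.
move=> h1; exists `|\det C|%N; split.
  rewrite !natr_absz !intr_norm detC normrM mulrC.
  by [].
apply/Hn/hC.
by rewrite -(intr_eq0 rat) detC mulf_neq0.
Qed.
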